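(* Let $k$ be a field and $(\mathfrak{n},\{\,,\})$ a Lie algebra over $k$ which is a direct vector space sum $\mathfrak{n}=\mathfrak{a}\oplus\mathfrak{b}$ of two subalgebras $\mathfrak{a},\mathfrak{b}$. Define a bracket on the underlying space by $[a+b,a'+b']=\{a,a'\}-\{b,b'\}$ for $a,a'\in\mathfrak{a}$, $b,b'\in\mathfrak{b}$. Then $\mathfrak{g}=(\mathfrak{a}\oplus\mathfrak{b},[\,,])$ is a Lie algebra, and the product $(a+b)\cdot(a'+b')=-\{b,a'+b'\}$ is a post-Lie algebra structure on $(\mathfrak{g},\mathfrak{n})$.
   Context: A post-Lie algebra structure on a pair of Lie algebras $\mathfrak{g}=(V,[\,,])$, $\mathfrak{n}=(V,\{\,,\})$ on the same vector space $V$ is a bilinear product $x\cdot y$ on $V$ satisfying, for all $x,y,z\in V$: (1) $x\cdot y-y\cdot x=[x,y]-\{x,y\}$; (2) $[x,y]\cdot z=x\cdot(y\cdot z)-y\cdot(x\cdot z)$; (3) $x\cdot\{y,z\}=\{x\cdot y,z\}+\{y,x\cdot z\}$. *)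

(* Defs.v *)
From HB Require Import structures.
From mathcomp Require Import all_boot all_order all_algebra.
Set Implicit Arguments. Unset Strict Implicit. Unset Printing Implicit Defensive.
Import GRing.Theory.
Local Open Scope ring_scope.

Definition bilinear_op (k : fieldType) (V : lmodType k) (op : V -> V -> V) : Prop :=
  (forall (c : k) (x y z : V), op (c *: x + y) z = c *: op x z + op y z) /\
  (forall (c : k) (x y z : V), op x (c *: y + z) = c *: op x y + op x z).

Definition is_lie_bracket (k : fieldType) (V : lmodType k) (br : V -> V -> V) : Prop :=
  [/\ bilinear_op br,
      (forall x : V, br x x = 0) &
      (forall x y z : V, br x (br y z) + br y (br z x) + br z (br x y) = 0)].

Definition is_subalgebra (k : fieldType) (V : lmodType k) (br : V -> V -> V)
  (A : {pred V}) : Prop :=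
  [/\ (0 : V) \in A,
      (forall (c : k) (u v : V), u \in A -> v \in A -> c *: u + v \in A) &
      (forall u v : V, u \in A -> v \in A -> br u v \in A)].

Definition is_direct_sum (k : fieldType) (V : lmodType k) (A B : {pred V}) : Prop :=
  (forall v : V, exists a b : V, [/\ a \in A, b \in B & v = a + b]) /\
  (forall v : V, v \in A -> v \in B -> v = 0).

Definition is_post_lie (k : fieldType) (V : lmodType k)
  (gbr nbr dot : V -> V -> V) : Prop :=
  [/\ bilinear_op dot,
      (forall x y : V, dot x y - dot y x = gbr x y - nbr x y),
      (forall x y z : V, dot (gbr x y) z = dot x (dot y z) - dot y (dot x z)) &
      (forall x y z : V, dot x (nbr y z) = nbr (dot x y) z + nbr y (dot x z))].

(* Main.v *)
Require Import Defs.
From mathcomp Require Import all_boot all_order all_algebra.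
Import GRing.Theory.
Local Open Scope ring_scope.

Set Implicit Arguments.
Section Aux.
Variables (k : fieldType) (V : lmodType k) (nbr : V -> V -> V).
Hypothesis hL : is_lie_bracket nbr.

Lemma nbr0l z : nbr 0 z = 0.
Proof.
case: hL => [[hl hr] _ _]; have := hl 1 0 0 z.
rewrite !scale1r addr0 => h; apply: (@addrI _ (nbr 0 z)); rewrite addr0. exact: (esym h).
Qed.
Lemma nbr0r z : nbr z 0 = 0.
Proof.
case: hL => [[hl hr] _ _]; have := hr 1 z 0 0.
rewrite !scale1r addr0 => h; apply: (@addrI _ (nbr z 0)); rewrite addr0; exact: (esym h).
Qed.
Lemma nbrDl x y z : nbr (x + y) z = nbr x z + nbr y z.
Proof. by case: hL => [[hl hr] _ _]; rewrite -[x]scale1r hl !scale1r. Qed.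
Lemma nbrDr x y z : nbr z (x + y) = nbr z x + nbr z y.
Proof. by case: hL => [[hl hr] _ _]; rewrite -[x]scale1r hr !scale1r. Qed.
Lemma nbrZl c x z : nbr (c *: x) z = c *: nbr x z.
Proof. by case: hL => [[hl hr] _ _]; rewrite -[c *: x]addr0 hl nbr0l addr0. Qed.
Lemma nbrZr c x z : nbr z (c *: x) = c *: nbr z x.
Proof. by case: hL => [[hl hr] _ _]; rewrite -[c *: x]addr0 hr nbr0r addr0. Qed.
Lemma nbrNl x z : nbr (- x) z = - nbr x z.
Proof. by rewrite -scaleN1r nbrZl scaleN1r. Qed.
Lemma nbrNr x z : nbr z (- x) = - nbr z x.
Proof. by rewrite -scaleN1r nbrZr scaleN1r. Qed.
Lemma nbrC x y : nbr y x = - nbr x y.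
Proof.
case: hL => [_ hxx _]; have := hxx (x + y).
rewrite nbrDl !nbrDr !hxx add0r addr0 => /eqP.
by rewrite addrC addr_eq0 => /eqP.
Qed.
Lemma jac2 x y z : nbr (nbr x y) z = nbr x (nbr y z) - nbr y (nbr x z).
Proof.
case: hL => [_ _ hj]; have := hj x y z.
rewrite (nbrC (nbr x y) z) (nbrC x z) nbrNr.
by move/eqP; rewrite addr_eq0 opprK => /eqP ->.
Qed.
Lemma jac x y z : nbr x (nbr y z) + nbr y (nbr z x) + nbr z (nbr x y) = 0.
Proof. by case: hL. Qed.
End Aux.

Lemma subN (k : fieldType) (V : lmodType k) (B : {pred V}) (nbr : V -> V -> V) :
  is_subalgebra nbr B -> forall v, v \in B -> - v \in B.
Proof. by case=> h0 hl _ v vB; rewrite -scaleN1r -[_ *: v]addr0 hl. Qed.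

Lemma L3 (V : zmodType) (a b c d e f : V) :
  (a + b) + (c + d) + (e + f) = (a + c + e) + (b + d + f).
Proof. by rewrite (addrACA a b c d) [LHS]addrACA. Qed.

Lemma L5 (V : zmodType) (Q S P T : V) :
  -(Q - S) - -(P + S) = T - -S - (T - P + (Q - S)).
Proof.
rewrite !opprK [in RHS]opprD [in RHS]addrC [in RHS]addrAC (opprB T P).
by rewrite (addrA (P - T)) addrNK addrC.
Qed.

Theorem proposition2p14 (k : fieldType) (V : lmodType k)
  (nbr : V -> V -> V) (A B : {pred V})
  (gbr dot : V -> V -> V) :
  is_lie_bracket nbr ->
  is_subalgebra nbr A -> is_subalgebra nbr B ->
  is_direct_sum A B ->
  (forall a a' b b' : V, a \in A -> a' \in A -> b \in B -> b' \in B ->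
     gbr (a + b) (a' + b') = nbr a a' - nbr b b') ->
  (forall a a' b b' : V, a \in A -> a' \in A -> b \in B -> b' \in B ->
     dot (a + b) (a' + b') = - nbr b (a' + b')) ->
  is_lie_bracket gbr /\ is_post_lie gbr nbr dot.
Proof.
move=> hL hA hB [hdec _] hg hd.
have hA' := hA; have hB' := hB.
case: hA' => A0 Alin Abr; case: hB' => B0 Blin Bbr.
have dotE : forall a b y, a \in A -> b \in B -> dot (a + b) y = - nbr b y.
  move=> a b y aA bB; have [a' [b' [aA' bB' ->]]] := hdec y; exact: hd.
have BN := @subN _ _ _ _ hB.
split.
- split.
  + split.
    * move=> c x y z.
      have [a1 [b1 [aA1 bB1 ->]]] := hdec x.
      have [a2 [b2 [aA2 bB2 ->]]] := hdec y.
      have [a3 [b3 [aA3 bB3 ->]]] := hdec z.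
      rewrite scalerDr addrACA.
      have h1 : c *: a1 + a2 \in A by apply: Alin.
      have h2 : c *: b1 + b2 \in B by apply: Blin.
      rewrite (hg _ _ _ _ h1 aA3 h2 bB3) (hg _ _ _ _ aA1 aA3 bB1 bB3) (hg _ _ _ _ aA2 aA3 bB2 bB3).
      by rewrite !(nbrDl hL) !(nbrZl hL) scalerBr opprD addrACA.
    * move=> c x y z.
      have [a1 [b1 [aA1 bB1 ->]]] := hdec x.
      have [a2 [b2 [aA2 bB2 ->]]] := hdec y.
      have [a3 [b3 [aA3 bB3 ->]]] := hdec z.
      rewrite scalerDr addrACA.
      have h1 : c *: a2 + a3 \in A by apply: Alin.
      have h2 : c *: b2 + b3 \in B by apply: Blin.
      rewrite (hg _ _ _ _ aA1 h1 bB1 h2) (hg _ _ _ _ aA1 aA2 bB1 bB2) (hg _ _ _ _ aA1 aA3 bB1 bB3).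
      by rewrite !(nbrDr hL) !(nbrZr hL) scalerBr opprD addrACA.
  + move=> x; have [a1 [b1 [aA1 bB1 ->]]] := hdec x.
    by rewrite hg //; case: hL => _ hxx _; rewrite !hxx subrr.
  + move=> x y z.
    have [a1 [b1 [aA1 bB1 ->]]] := hdec x.
    have [a2 [b2 [aA2 bB2 ->]]] := hdec y.
    have [a3 [b3 [aA3 bB3 ->]]] := hdec z.
    rewrite (hg _ _ _ _ aA2 aA3 bB2 bB3) (hg _ _ _ _ aA3 aA1 bB3 bB1) (hg _ _ _ _ aA1 aA2 bB1 bB2).
    rewrite !hg ?Abr ?BN ?Bbr //.
    by rewrite !(nbrNr hL) !opprK L3 !(jac hL) addr0.
- rewrite /is_post_lie /bilinear_op; split; first split.
  +
    * move=> c x y z.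
      have [a1 [b1 [aA1 bB1 ->]]] := hdec x.
      have [a2 [b2 [aA2 bB2 ->]]] := hdec y.
      have h1 : c *: a1 + a2 \in A by apply: Alin.
      have h2 : c *: b1 + b2 \in B by apply: Blin.
      rewrite scalerDr addrACA (dotE _ _ _ h1 h2) (dotE _ _ _ aA1 bB1) (dotE _ _ _ aA2 bB2).
      by rewrite (nbrDl hL) (nbrZl hL) opprD scalerN.
    * move=> c x y z.
      have [a1 [b1 [aA1 bB1 ->]]] := hdec x.
      by rewrite !(dotE _ _ _ aA1 bB1) (nbrDr hL) (nbrZr hL) opprD scalerN.
  + move=> x y.
    have [a1 [b1 [aA1 bB1 ->]]] := hdec x.
    have [a2 [b2 [aA2 bB2 ->]]] := hdec y.
    rewrite (dotE _ _ _ aA1 bB1) (dotE _ _ _ aA2 bB2) (hg _ _ _ _ aA1 aA2 bB1 bB2).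
    rewrite !(nbrDl hL) !(nbrDr hL) (nbrC hL b2 a1) (nbrC hL b2 b1).
    exact: L5.
  + move=> x y z.
    have [a1 [b1 [aA1 bB1 ->]]] := hdec x.
    have [a2 [b2 [aA2 bB2 ->]]] := hdec y.
    have h1 : nbr a1 a2 \in A by apply: Abr.
    have h2 : - nbr b1 b2 \in B by apply: BN; apply: Bbr.
    rewrite (hg _ _ _ _ aA1 aA2 bB1 bB2) (dotE _ _ _ h1 h2) !(dotE _ _ _ aA1 bB1) !(dotE _ _ _ aA2 bB2).
    by rewrite (nbrNl hL) !(nbrNr hL) !opprK (jac2 hL).
  + move=> x y z.
    have [a1 [b1 [aA1 bB1 ->]]] := hdec x.
    rewrite !(dotE _ _ _ aA1 bB1) (nbrNl hL) (nbrNr hL) (jac2 hL).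
    by rewrite opprB addrC addKr.
Qed.
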